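(* Let $b>1$, $p\ge1$, $R\subseteq\{0,\ldots,p-1\}$, let $k$ be the greatest divisor of $p$ coprime with $b$ and $d=p/k$. A state of $\mathcal{A}_{R,p}$ is a multiple of $d$ if and only if it belongs to a $0$-circuit.
   Context: $A_b=\{0,\ldots,b-1\}$. $\mathcal{A}_{R,p}$: complete deterministic automaton over $A_b$ with states $\{0,\ldots,p-1\}$, initial $0$, final $R$, transitions $n\xrightarrow{a}(nb+a)\bmod p$. A $0$-circuit is a circuit all of whose transitions are labelled by the digit $0$. *)

(* Defs.v *)
From mathcomp Require Import all_boot.
Set Implicit Arguments. Unset Strict Implicit. Unset Printing Implicit Defensive.

(* The automaton A_{R,p} over the alphabet A_b = {0,...,b-1}:
   states {0,...,p-1}, initial state 0, final states R,
   transition n --a--> (n*b + a) mod p. *)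
Definition trans (b p n a : nat) : nat := (n * b + a) %% p.

Definition run (b p s : nat) (w : seq nat) : nat := foldl (trans b p) s w.

Definition on_zero_circuit (b p s : nat) : Prop :=
  exists w : seq nat, [/\ w != [::], all (fun a => a == 0) w & run b p s w = s].

Definition coprime_part (b p : nat) : nat :=
  \max_(k < p.+1 | (k %| p) && coprime k b) k.

(* Main.v *)
Require Import Defs.
From mathcomp Require Import all_boot.
From mathcomp Require Import all_algebra all_fingroup all_solvable.

Lemma run_zeros b p s n : s < p -> run b p s (nseq n 0) = (s * b ^ n) %% p.
Proof.
elim: n s => [|n IH] s sp /=; first by rewrite expn0 muln1 modn_small.
rewrite /run /= -/(run b p _ _) /trans addn0 IH; last by rewrite ltn_mod (leq_ltn_trans _ sp).
by rewrite modnMml expnS mulnA.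
Qed.

Lemma cp_spec b p : 0 < p ->
  let k := coprime_part b p in
  [/\ k %| p, coprime k b & forall j, j %| p -> coprime j b -> j %| k].
Proof.
move=> p0 k.
pose A := [pred i : 'I_p.+1 | (nat_of_ord i %| p) && coprime i b].
have A1 : (inord 1 : 'I_p.+1) \in A.
  by rewrite inE inordK ?ltnS // dvd1n coprime1n.
have card_gt0P_lem : 0 < #|A| by apply/card_gt0P; exists (inord 1).
have [i0 Ai0 Hm] := @eq_bigmax_cond _ A (fun i => nat_of_ord i) (card_gt0P_lem).
have kE : k = i0 by rewrite /k /coprime_part -Hm.
move: Ai0; rewrite inE => /andP [dk ck].
have kmax : forall j, j %| p -> coprime j b -> j <= k.
  move=> j jd jc.
  have jp : j < p.+1 by rewrite ltnS dvdn_leq.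
  rewrite /k /coprime_part.
  have := (@leq_bigmax_cond _ (fun i : 'I_p.+1 => (nat_of_ord i %| p) && coprime i b) (fun i => nat_of_ord i) (Ordinal jp)); rewrite /= jd jc; apply => //.
split; rewrite ?kE //.
move=> j jd jc.
have ld : lcmn j k %| p by rewrite dvdn_lcm jd kE dk.
have lc : coprime (lcmn j k) b.
  apply: (@coprime_dvdl _ (j * k)); first by rewrite dvdn_lcm dvdn_mulr ?dvdn_mull.
  by rewrite coprimeMl jc kE ck.
have := kmax _ ld lc.
have kp : 0 < k by rewrite kE; apply: (dvdn_gt0 p0 dk).
have kl : k %| lcmn j k by rewrite dvdn_lcmr.
have l0 : 0 < lcmn j k := dvdn_gt0 p0 ld.
move=> le; have eq : lcmn j k = k by apply/eqP; rewrite eqn_leq le dvdn_leq.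
by rewrite -kE -eq dvdn_lcml.
Qed.

Theorem lemma22 (b p : nat) (R : pred nat) :
  1 < b -> 1 <= p -> (forall r, R r -> r < p) ->
  let k := coprime_part b p in
  let d := p %/ k in
  forall s : nat, s < p -> (d %| s) <-> on_zero_circuit b p s.
Proof.
move=> b1 p0 _ k d s sp.
have [kd kc kmax] := @cp_spec b p p0.
rewrite -/k in kd kc kmax.
have k0 : 0 < k := dvdn_gt0 p0 kd.
have pE : p = d * k by rewrite /d divnK.
have b0 : 0 < b by apply: ltnW.
have circ n : 0 < n -> p %| s * (b ^ n).-1 -> on_zero_circuit b p s.
  move=> n0 H; exists (nseq n 0); split.
  - by rewrite -size_eq0 size_nseq -lt0n.
  - by apply/all_pred1P; rewrite size_nseq.
  rewrite run_zeros //.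
  rewrite -[RHS](modn_small sp); apply/eqP.
  rewrite eqn_mod_dvd; last by rewrite leq_pmulr // expn_gt0 b0.
  by rewrite -{2}(muln1 s) -mulnBr subn1.
split.
- move=> ds; apply: (circ (totient k)); first by rewrite totient_gt0.
  case/dvdnP: ds => t ->.
  have : k %| (b ^ totient k).-1.
    have e := @Euler_exp_totient b k ltac:(by rewrite coprime_sym) .
    have bp : 0 < b ^ totient k by rewrite expn_gt0 b0.
    rewrite -subn1; rewrite -(eqn_mod_dvd) //; first by apply/eqP; rewrite e.
  by move=> H; rewrite pE (mulnC t) -mulnA dvdn_mul // dvdn_mull.
- case=> w [wn /all_pred1P wE]; rewrite wE run_zeros // => E.
  set n := size w in E.
  have n0 : 0 < n by rewrite lt0n size_eq0.
  have bp : 0 < b ^ n by rewrite expn_gt0 b0.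
  have H : p %| s * (b ^ n).-1.
    rewrite -subn1 mulnBr muln1 -eqn_mod_dvd ?leq_pmulr //.
    by rewrite E modn_small.
  pose g := gcdn p s.
  have g0 : 0 < g by rewrite gcdn_gt0 p0.
  pose j := p %/ g. pose s' := s %/ g.
  have pg : p = j * g by rewrite /j divnK // dvdn_gcdl.
  have sg : s = s' * g by rewrite /s' divnK // dvdn_gcdr.
  have cjs : coprime j s' by rewrite /coprime -(eqn_pmul2r g0) muln_gcdl -pg -sg mul1n.
  have H' : j %| (b ^ n).-1.
    rewrite -(Gauss_dvdr _ cjs) -(dvdn_pmul2r g0) mulnAC -sg -pg //.
  have jc : coprime j b.
    rewrite -(coprime_pexpr _ _ n0); apply: coprime_dvdl H' _.
    by rewrite -{2}(prednK bp) coprimenS.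
  have jk : j %| k by apply: kmax => //; rewrite pg dvdn_mulr.
  have dg : d %| g.
    rewrite -(dvdn_pmul2r k0) -pE pg mulnC dvdn_mul //.
  by apply: dvdn_trans dg _; rewrite dvdn_gcdr.
Qed.
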